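(* Let $\alpha\in\mathbb{C}$ and let $S_n(x)\sim\left(\left(\frac{e^t+1}{2}\right)^{\alpha},\ \frac{t^2}{\log(1+t)}\right)$. Then for $n\ge1$, $$S_n(x)=\sum_{l=0}^{n-1}\binom{n-1}{l}N_l^{(n)}\,E_{n-l}^{(\alpha)}(x).$$
   Context: For invertible $g(t)$ (nonzero constant term) and delta series $f(t)$ ($f(0)=0$, nonzero coefficient of $t$), the Sheffer sequence $S_n(x)\sim(g(t),f(t))$ is the unique polynomial sequence with $\sum_{k\ge0}S_k(y)\frac{t^k}{k!}=\frac{1}{g(\bar f(t))}e^{y\bar f(t)}$ for all $y\in\mathbb{C}$, where $\bar f$ is the compositional inverse of $f$. Complex powers of series with constant term $1$ are defined by $h^a=\exp(a\log h)$. The Narumi polynomials of order $a$ are defined by $\left(\frac{\log(1+t)}{t}\right)^a(1+t)^x=\sum_{n\ge0}N_n^{(a)}(x)\frac{t^n}{n!}$, and the Narumi numbers are $N_n^{(a)}=N_n^{(a)}(0)$. The Euler polynomials of order $\alpha$ are defined by $\left(\frac{2}{e^t+1}\right)^{\alpha}e^{xt}=\sum_{n\ge0}E_n^{(\alpha)}(x)\frac{t^n}{n!}$. *)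

(* Defs.v *)
From HB Require Import structures.
From mathcomp Require Import all_boot all_order all_algebra.
Set Implicit Arguments. Unset Strict Implicit. Unset Printing Implicit Defensive.
Import Order.TTheory GRing.Theory Num.Theory.
Local Open Scope ring_scope.

Section FPS.
Variable R : fieldType.

Definition fps := nat -> R.

Definition fone : fps := fun n => (n == 0)%:R.
Definition fX : fps := fun n => (n == 1)%:R.

Definition fadd (a b : fps) : fps := fun n => a n + b n.
Definition fscale (c : R) (a : fps) : fps := fun n => c * a n.
Definition fmul (a b : fps) : fps :=
  fun n => \sum_(i < n.+1) a i * b (n - i)%N.
Definition fpow (a : fps) (k : nat) : fps := iter k (fmul a) fone.

(* composition a(b(t)), for b with zero constant term *)
Definition fcomp (a b : fps) : fps :=
  fun n => \sum_(k < n.+1) a k * fpow b k n.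

(* exp(b) for b with zero constant term *)
Definition fexp (b : fps) : fps :=
  fun n => \sum_(k < n.+1) fpow b k n / (k`!)%:R.

(* log(1 + h) for h with zero constant term *)
Definition flog1p (h : fps) : fps :=
  fun n => \sum_(1 <= k < n.+1) (-1) ^+ k.+1 / k%:R * fpow h k n.

(* log h for h with constant term 1 *)
Definition flog (h : fps) : fps := flog1p (fadd h (fscale (-1) fone)).

(* complex (scalar) power h^a = exp(a log h), for h with constant term 1 *)
Definition fpowc (h : fps) (a : R) : fps := fexp (fscale a (flog h)).

(* multiplicative inverse 1/h, for h with nonzero constant term:
   h = h0 (1 + u), 1/h = h0^-1 * sum_k (-u)^k *)
Definition fps_inv (h : fps) : fps :=
  let u := fun n => if n == 0%N then 0 else h n / h 0%N in
  fun n => (h 0%N)^-1 * \sum_(k < n.+1) fpow (fscale (-1) u) k n.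

(* log(1+t)/t *)
Definition flogq : fps := fun n => flog1p fX n.+1.

(* Narumi numbers N_n^{(a)} = n! [t^n] (log(1+t)/t)^a *)
Definition narumi (n : nat) (a : R) : R := (n`!)%:R * fpowc flogq a n.

(* Euler polynomials E_n^{(alpha)}(x) = n! [t^n] (2/(e^t+1))^alpha e^{xt} *)
Definition euler_poly (n : nat) (alpha x : R) : R :=
  (n`!)%:R *
  fmul (fpowc (fscale 2 (fps_inv (fadd (fexp fX) fone))) alpha)
       (fexp (fscale x fX)) n.

(* S ~ (g, f): sum_k S_k(y) t^k/k! = 1/g(fbar t) * exp(y fbar t), for all y,
   where fbar is the compositional inverse of f. *)
Definition is_sheffer (g f : fps) (S : nat -> {poly R}) : Prop :=
  exists fb : fps, fb 0%N = 0 /\ fcomp f fb = fX /\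
    forall (y : R) (n : nat),
      (S n).[y] = (n`!)%:R * fmul (fps_inv (fcomp g fb)) (fexp (fscale y fb)) n.

End FPS.

(* Main.v *)
Require Import Defs.
From HB Require Import structures.
From mathcomp Require Import all_boot all_order all_algebra.
From mathcomp Require Import boolp zify ring.
Set Implicit Arguments. Unset Strict Implicit. Unset Printing Implicit Defensive.
Import Order.TTheory GRing.Theory Num.Theory.
Local Open Scope ring_scope.

Section Base.
Variable R : fieldType.
Local Notation F := (fps R).
Definition fzero : F := fun _ => 0.
Definition fopp (a : F) : F := fun n => - a n.
Lemma faddA : associative (@fadd R). Proof. by move=>a b c; apply: funext=>n; rewrite /fadd addrA. Qed.
Lemma faddC : commutative (@fadd R). Proof. by move=>a b; apply: funext=>n; rewrite /fadd addrC. Qed.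
Lemma fadd0 : left_id fzero (@fadd R). Proof. by move=>a; apply: funext=>n; rewrite /fadd /fzero add0r. Qed.
Lemma faddN : left_inverse fzero fopp (@fadd R). Proof. by move=>a; apply: funext=>n; rewrite /fadd /fzero /fopp addNr. Qed.

Definition trunc n (a : F) : {poly R} := \poly_(i < n.+1) a i.
Lemma trunc_coef n a i : (i <= n)%N -> (trunc n a)`_i = a i.
Proof. by move=> h; rewrite coef_poly ltnS h. Qed.

Lemma fmul_poly n (a b : F) (p q : {poly R}) :
  (forall i, (i <= n)%N -> p`_i = a i) -> (forall i, (i <= n)%N -> q`_i = b i) ->
  fmul a b n = (p * q)`_n.
Proof.
move=> hp hq; rewrite coefM /fmul; apply: eq_bigr => i _.
have hi : (i <= n)%N by rewrite -ltnS.
by rewrite hp // hq // leq_subr.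
Qed.

Lemma fmul_trunc n a b : fmul a b n = (trunc n a * trunc n b)`_n.
Proof. by apply: fmul_poly => i hi; rewrite trunc_coef. Qed.

Lemma fmulA : associative (@fmul R).
Proof.
move=> a b c; apply: funext => n.
rewrite (@fmul_poly n a (fmul b c) (trunc n a) (trunc n b * trunc n c)); last 2 first.
- by move=> i hi; rewrite trunc_coef.
- move=> i hi; rewrite (@fmul_poly i b c (trunc n b) (trunc n c)) // => j hj;
  by rewrite trunc_coef // (leq_trans hj hi).
rewrite (@fmul_poly n (fmul a b) c (trunc n a * trunc n b) (trunc n c)); last 2 first.
- move=> i hi; rewrite (@fmul_poly i a b (trunc n a) (trunc n b)) // => j hj;
  by rewrite trunc_coef // (leq_trans hj hi).
- by move=> i hi; rewrite trunc_coef.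
by rewrite mulrA.
Qed.

Lemma fmulC : commutative (@fmul R).
Proof. by move=> a b; apply: funext => n; rewrite !fmul_trunc mulrC. Qed.

Lemma fmul1 : left_id (@fone R) (@fmul R).
Proof.
move=> a; apply: funext => n; rewrite (@fmul_poly n _ _ 1 (trunc n a)).
  by rewrite mul1r trunc_coef.
- by move=> i _; rewrite coef1.
- by move=> i hi; rewrite trunc_coef.
Qed.

Lemma fmulDl : left_distributive (@fmul R) (@fadd R).
Proof.
move=> a b c; apply: funext => n; rewrite /fmul /fadd -big_split /=.
by apply: eq_bigr => i _; rewrite mulrDl.
Qed.

Lemma fone_neq0 : fone R != fzero.
Proof. apply/eqP => /(congr1 (fun f => f 0%N)); rewrite /fone /fzero /= => /eqP. by rewrite oner_eq0. Qed.
End Base.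

HB.instance Definition _ (R : fieldType) := Choice.on (fps R).
HB.instance Definition _ (R : fieldType) :=
  GRing.isZmodule.Build (fps R) (@faddA R) (@faddC R) (@fadd0 R) (@faddN R).
HB.instance Definition _ (R : fieldType) :=
  GRing.Zmodule_isComNzRing.Build (fps R) (@fmulA R) (@fmulC R) (@fmul1 R) (@fmulDl R) (@fone_neq0 R).



Section Coef.
Variable R : fieldType.
Local Notation F := (fps R).
Local Notation X := (fX R).

Definition cst (r : R) : F := fun n => if n is 0%N then r else 0.
Definition feqn n (a b : F) := forall i, (i <= n)%N -> a i = b i.

Lemma fpowE (a : F) k : fpow a k = a ^+ k.
Proof. elim: k => [//|k IH]; by rewrite exprS /= IH. Qed.
Lemma fmulE (a b : F) : fmul a b = a * b. Proof. by []. Qed.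
Lemma faddE (a b : F) : fadd a b = a + b. Proof. by []. Qed.
Lemma foneE : fone R = 1. Proof. by []. Qed.

Lemma fcoefD (a b : F) n : (a + b) n = a n + b n. Proof. by []. Qed.
Lemma fcoefN (a : F) n : (- a) n = - a n. Proof. by []. Qed.
Lemma fcoefB (a b : F) n : (a - b) n = a n - b n. Proof. by []. Qed.
Lemma fcoef0 n : (0 : F) n = 0. Proof. by []. Qed.
Lemma fcoef1 n : (1 : F) n = (n == 0%N)%:R. Proof. by []. Qed.
Lemma fcoefM (a b : F) n : (a * b) n = \sum_(i < n.+1) a i * b (n - i)%N. Proof. by []. Qed.
Lemma fcoef_sum I (r : seq I) (P : pred I) (f : I -> F) n :
  (\sum_(i <- r | P i) f i) n = \sum_(i <- r | P i) f i n.
Proof. by elim/big_rec2: _ => // i y1 y2 _ <-. Qed.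
Lemma fcoefMn (a : F) k n : (a *+ k) n = a n *+ k.
Proof. by elim: k => [|k IH]; rewrite ?mulr0n // !mulrS fcoefD IH. Qed.

Lemma fcoefcM r (a : F) n : (cst r * a) n = r * a n.
Proof.
rewrite fcoefM big_ord_recl /= subn0 big1 ?addr0 // => i _. by rewrite mul0r.
Qed.
Lemma fcoefMc r (a : F) n : (a * cst r) n = a n * r.
Proof. by rewrite mulrC fcoefcM mulrC. Qed.
Lemma fscaleE r (a : F) : fscale r a = cst r * a.
Proof. by apply: funext => n; rewrite fcoefcM. Qed.
Lemma cstM r s : cst (r * s) = cst r * cst s.
Proof. apply: funext => n; rewrite fcoefcM; case: n => //= _; by rewrite mulr0. Qed.
Lemma cstD r s : cst (r + s) = cst r + cst s.
Proof. apply: funext => n; rewrite fcoefD; case: n => //= _; by rewrite addr0. Qed.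
Lemma cstN r : cst (- r) = - cst r.
Proof. apply: funext => n; rewrite fcoefN; case: n => //= _; by rewrite oppr0. Qed.
Lemma cst1 : cst 1 = 1. Proof. by apply: funext => -[]. Qed.
Lemma cst0 : cst 0 = 0. Proof. by apply: funext => -[]. Qed.
Lemma cstn k : cst (k%:R) = k%:R.
Proof. elim: k => [|k IH]; first exact: cst0. by rewrite !mulrS cstD IH cst1. Qed.

Lemma fcoef0M (a b : F) : (a * b) 0%N = a 0%N * b 0%N.
Proof. by rewrite fcoefM big_ord1. Qed.
Lemma fcoef0X (a : F) k : (a ^+ k) 0%N = a 0%N ^+ k.
Proof. elim: k => [|k IH]; first by rewrite !expr0. by rewrite !exprS fcoef0M IH. Qed.

Lemma fcoefXM0 (a : F) : (X * a) 0%N = 0.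
Proof. by rewrite fcoef0M /fX mul0r. Qed.
Lemma fcoefXMS (a : F) n : (X * a) n.+1 = a n.
Proof.
rewrite fcoefM big_ord_recl /fX /= mul0r add0r big_ord_recl /= subSS subn0 mul1r.
by rewrite big1 ?addr0 // => i _; rewrite mul0r.
Qed.
Lemma fcoefXnM (a : F) k n : (X ^+ k * a) n = if (k <= n)%N then a (n - k)%N else 0.
Proof.
elim: k n => [|k IH] n; first by rewrite expr0 mul1r subn0.
rewrite exprS -mulrA; case: n => [|n]; first by rewrite fcoefXM0.
by rewrite fcoefXMS IH ltnS subSS.
Qed.

Lemma val_pow (a : F) : a 0%N = 0 -> forall k i, (i < k)%N -> (a ^+ k) i = 0.
Proof.
move=> a0; elim=> [//|k IH] i hi.
rewrite exprS fcoefM big1 // => -[j hj] _ /=.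
case: j hj => [|j] hj; first by rewrite a0 mul0r.
by rewrite IH ?mulr0 //; lia.
Qed.

Lemma mul_val (u c : F) m i : (forall j, (j < m)%N -> c j = 0) -> (i < m)%N -> (u * c) i = 0.
Proof.
move=> hc hi; rewrite fcoefM big1 // => j _; rewrite hc ?mulr0 //.
exact: leq_ltn_trans (leq_subr _ _) hi.
Qed.

Lemma feqn_mul n (a a' b b' : F) : feqn n a a' -> feqn n b b' -> feqn n (a * b) (a' * b').
Proof.
move=> ha hb i hi; rewrite !fcoefM; apply: eq_bigr => -[j hj] _ /=.
rewrite ha ?hb //; last by rewrite -ltnS (leq_trans hj).
exact: leq_trans (leq_subr _ _) hi.
Qed.

Lemma feqn_refl n (a : F) : feqn n a a. Proof. by []. Qed.
Lemma feqn_sym n (a b : F) : feqn n a b -> feqn n b a. Proof. by move=> h i hi; rewrite h. Qed.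
Lemma feqn_trans n (a b c : F) : feqn n a b -> feqn n b c -> feqn n a c.
Proof. by move=> h1 h2 i hi; rewrite h1 ?h2. Qed.
Lemma feqn_le m n (a b : F) : (m <= n)%N -> feqn n a b -> feqn m a b.
Proof. by move=> hmn h i hi; rewrite h // (leq_trans hi). Qed.
Lemma feqn_funext (a b : F) : (forall n, feqn n a b) -> a = b.
Proof. by move=> h; apply: funext => n; apply: (h n). Qed.

Lemma cst_sum I (r : seq I) (P : pred I) (f : I -> R) :
  cst (\sum_(i <- r | P i) f i) = \sum_(i <- r | P i) cst (f i).
Proof. by elim/big_rec2: _ => [|i y1 y2 _ <-]; rewrite ?cst0 ?cstD. Qed.

Definition Pf n (a : F) : {poly F} := \poly_(i < n.+1) cst (a i).

Lemma horner_Pf n a (c : F) : (Pf n a).[c] = \sum_(i < n.+1) cst (a i) * c ^+ i.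
Proof.
rewrite (@horner_coef_wide _ n.+1); last exact: size_poly.
by apply: eq_bigr => i _; rewrite coef_poly ltn_ord.
Qed.

Lemma comp_eqn (a c : F) n : c 0%N = 0 -> feqn n (fcomp a c) (Pf n a).[c].
Proof.
move=> c0 i hi; rewrite horner_Pf fcoef_sum /fcomp.
rewrite (big_ord_widen n.+1 (fun k => a k * fpow c k i)) // big_mkcond /=.
apply: eq_bigr => -[k hk] _ /=; rewrite fcoefcM fpowE; case: ifP => // /negbT.
by rewrite -leqNgt => h; rewrite val_pow ?mulr0.
Qed.

Lemma horner_eqn (P Q : {poly F}) (c : F) n : c 0%N = 0 ->
  (forall k, (k <= n)%N -> P`_k = Q`_k) -> feqn n P.[c] Q.[c].
Proof.
move=> c0 hPQ i hi; apply/eqP; rewrite -subr_eq0 -fcoefB -hornerN -hornerD.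
rewrite horner_coef fcoef_sum; apply/eqP/big1 => -[k hk] _ /=.
case: (leqP k n) => hkn; first by rewrite coefB hPQ // subrr mul0r.
rewrite (@mul_val _ _ k) //; last exact: leq_ltn_trans hi hkn.
by move=> j hj; rewrite val_pow.
Qed.

Lemma comp0 (a c : F) : fcomp a c 0%N = a 0%N.
Proof. by rewrite /fcomp big_ord1 /= /fone mulr1. Qed.

Lemma compD (a b c : F) : fcomp (a + b) c = fcomp a c + fcomp b c.
Proof.
apply: funext => n; rewrite fcoefD /fcomp -big_split /=.
by apply: eq_bigr => i _; rewrite fcoefD mulrDl.
Qed.

Lemma compN (a c : F) : fcomp (- a) c = - fcomp a c.
Proof.
apply: funext => n; rewrite fcoefN /fcomp -sumrN /=.
by apply: eq_bigr => i _; rewrite fcoefN mulNr.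
Qed.

Lemma comp_cst r (c : F) : fcomp (cst r) c = cst r.
Proof.
apply: funext => n; rewrite /fcomp big_ord_recl /= /fone big1.
  by case: n => [|n] /=; rewrite ?mulr1 ?mulr0 addr0.
by move=> i _; rewrite mul0r.
Qed.

Lemma comp1 (c : F) : fcomp 1 c = 1.
Proof. by rewrite -cst1 comp_cst. Qed.

Lemma compX (c : F) : c 0%N = 0 -> fcomp X c = c.
Proof.
move=> c0; apply: funext => n; rewrite /fcomp big_ord_recl /= /fX /= mul0r add0r.
case: n => [|n]; first by rewrite big_ord0 c0.
rewrite big_ord_recl /= mul1r big1 ?addr0; first by rewrite fmulE foneE mulr1.
by move=> i _; rewrite mul0r.
Qed.

Lemma compM (a b c : F) : c 0%N = 0 -> fcomp (a * b) c = fcomp a c * fcomp b c.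
Proof.
move=> c0; apply: feqn_funext => n i hi.
rewrite (comp_eqn (a * b) c0 hi).
rewrite (@feqn_mul n _ (Pf n a).[c] _ (Pf n b).[c]) //; last 2 first.
- exact: comp_eqn.
- exact: comp_eqn.
rewrite -hornerM; apply: (@horner_eqn _ _ c n c0 _ i hi) => k hk.
rewrite coefM coef_poly ltnS hk fcoefM cst_sum; apply: eq_bigr => -[j hj] _ /=.
have h1 : (j < n.+1)%N by lia.
have h2 : (k - j < n.+1)%N by lia.
by rewrite !coef_poly h1 h2 cstM.
Qed.

Lemma compXn (a c : F) k : c 0%N = 0 -> fcomp (a ^+ k) c = fcomp a c ^+ k.
Proof.
move=> c0; elim: k => [|k IH]; first by rewrite !expr0 comp1.
by rewrite !exprS compM // IH.
Qed.
End Coef.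


Section Deriv.
Variable R : fieldType.
Local Notation F := (fps R).
Local Notation X := (fX R).

Definition D (a : F) : F := fun n => a n.+1 *+ n.+1.

Lemma DD (a b : F) : D (a + b) = D a + D b.
Proof. by apply: funext => n; rewrite /D !fcoefD mulrnDl. Qed.
Lemma DN (a : F) : D (- a) = - D a.
Proof. by apply: funext => n; rewrite /D !fcoefN mulNrn. Qed.
Lemma DB (a b : F) : D (a - b) = D a - D b.
Proof. by rewrite DD DN. Qed.
Lemma D0 : D 0 = 0.
Proof. by apply: funext => n; rewrite /D fcoef0 mul0rn. Qed.
Lemma Dcst (r : R) : D (cst r) = 0.
Proof. by apply: funext => n; rewrite /D /= mul0rn. Qed.
Lemma D1 : D 1 = 0.
Proof. by rewrite -cst1 Dcst. Qed.
Lemma DX : D X = 1.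
Proof. apply: funext => -[|n]; by rewrite /D /fX /= ?mulr1n ?mul0rn. Qed.
Lemma D_sum I (r : seq I) (P : pred I) (f : I -> F) :
  D (\sum_(i <- r | P i) f i) = \sum_(i <- r | P i) D (f i).
Proof. by elim/big_rec2: _ => [|i y1 y2 _ <-]; rewrite ?D0 ?DD. Qed.
Lemma DMn (a : F) k : D (a *+ k) = D a *+ k.
Proof. by elim: k => [|k IH]; rewrite ?mulr0n ?D0 // !mulrS DD IH. Qed.
Lemma cstMn (r : R) k : cst (r *+ k) = cst r *+ k.
Proof. by elim: k => [|k IH]; [rewrite !mulr0n (@cst0 R) | rewrite !mulrS cstD IH]. Qed.
Lemma Dcoef (a : F) n : D a n = a n.+1 *+ n.+1. Proof. by []. Qed.

Lemma mul_poly n (a b : F) (p q : {poly R}) :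
  (forall i, (i <= n)%N -> p`_i = a i) -> (forall i, (i <= n)%N -> q`_i = b i) ->
  (a * b) n = (p * q)`_n.
Proof. exact: fmul_poly. Qed.

Lemma DM (a b : F) : D (a * b) = D a * b + a * D b.
Proof.
apply: funext => n; rewrite fcoefD /D.
set p := trunc n.+1 a; set q := trunc n.+1 b.
have hp : forall i, (i <= n.+1)%N -> p`_i = a i by move=> i hi; rewrite trunc_coef.
have hq : forall i, (i <= n.+1)%N -> q`_i = b i by move=> i hi; rewrite trunc_coef.
rewrite (@mul_poly n.+1 a b p q) // -coef_deriv derivM coefD.
rewrite (@mul_poly n _ _ p^`() q); last 2 first.
- by move=> i hi; rewrite coef_deriv hp.
- by move=> i hi; rewrite hq // (leq_trans hi).
rewrite (@mul_poly n _ _ p q^`()) //.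
- by move=> i hi; rewrite hp // (leq_trans hi).
- by move=> i hi; rewrite coef_deriv hq.
Qed.

Lemma DXn (a : F) k : D (a ^+ k) = (a ^+ k.-1 * D a) *+ k.
Proof.
elim: k => [|k IH]; first by rewrite expr0 D1 mulr0n.
rewrite exprS DM IH /=; case: k IH => [|k] IH; first by rewrite !expr0 mulr0n mulr0 addr0 mulr1 mul1r mulr1n.
rewrite /= mulrnAr mulrA -exprS [D a * _]mulrC.
by rewrite [in RHS]mulrS.
Qed.

Lemma D_eqn n (u v : F) : feqn n.+1 u v -> feqn n (D u) (D v).
Proof. by move=> h i hi; rewrite /D h. Qed.

Lemma chain (a c : F) : c 0%N = 0 -> D (fcomp a c) = fcomp (D a) c * D c.
Proof.
move=> c0; apply: feqn_funext => n i hi.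
rewrite (D_eqn (comp_eqn a c0) hi).
rewrite (@feqn_mul _ n _ (Pf n (D a)).[c] _ (D c)) //; last exact: comp_eqn.
rewrite !horner_Pf D_sum big_ord_recl /= expr0 mulr1 Dcst add0r.
rewrite big_distrl; apply: (congr1 (fun f : F => f i)); apply: eq_bigr => j _.
rewrite DM Dcst mul0r add0r DXn /= /bump /= add1n mulrnAr -mulr_natl -mulr_natl mulrA mulrA.
by rewrite add0n mulr1 Dcoef cstMn mulr_natl.
Qed.
End Deriv.
Arguments D {R} a n.


Section Inv.
Variable R : fieldType.
Local Notation F := (fps R).
Local Notation X := (fX R).

Lemma finv0 (h : F) : fps_inv h 0%N = (h 0%N)^-1.
Proof. by rewrite /fps_inv /= big_ord1 /= /fone mulr1. Qed.

Lemma inv_correct (h : F) : h 0%N != 0 -> h * fps_inv h = 1.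
Proof.
move=> h0; apply: funext => n.
set u : F := fun n => if n == 0%N then 0 else h n / h 0%N.
set v : F := fscale (-1) u.
have v0 : v 0%N = 0 by rewrite /v /fscale /u /= mulr0.
have hv : h = cst (h 0%N) * (1 - v).
  apply: funext => -[|m]; rewrite fcoefcM fcoefB fcoef1 /v /fscale /u /=.
    by rewrite mulr0 subr0 mulr1.
  by rewrite sub0r mulN1r opprK mulrC divfK.
have hG : feqn n (fps_inv h) (cst (h 0%N)^-1 * \sum_(k < n.+1) v ^+ k).
  move=> i hi; rewrite fcoefcM fcoef_sum /fps_inv /=; congr (_ * _).
  rewrite (big_ord_widen n.+1 (fun k => fpow v k i)) // big_mkcond /=.
  apply: eq_bigr => -[k hk] _ /=; rewrite fpowE; case: ifP => // /negbT.
  by rewrite -leqNgt => hh; rewrite val_pow.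
rewrite (@feqn_mul _ n h h _ _ (@feqn_refl _ n h) hG n (leqnn n)).
have -> : h * (cst (h 0%N)^-1 * \sum_(k < n.+1) v ^+ k) = 1 - v ^+ n.+1.
  rewrite {1}hv mulrCA !mulrA -cstM mulVf // cst1 mul1r.
  by rewrite -[1 - v]opprB mulNr -subrX1 opprB.
by rewrite fcoefB val_pow // subr0.
Qed.

Lemma inv_uniq (h b : F) : h * b = 1 -> fps_inv h = b.
Proof.
move=> hb.
have h0 : h 0%N != 0.
  apply/eqP => e; have := congr1 (fun f : F => f 0%N) hb.
  by rewrite fcoef0M e mul0r fcoef1 /= => /eqP; rewrite eq_sym oner_eq0.
by rewrite -[fps_inv h]mul1r -hb mulrC mulrA [fps_inv h * h]mulrC inv_correct // mul1r.
Qed.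

Lemma inv_inv (h : F) : h 0%N != 0 -> fps_inv (fps_inv h) = h.
Proof. by move=> h0; apply: inv_uniq; rewrite mulrC inv_correct. Qed.

Lemma inv_comp (g c : F) : c 0%N = 0 -> g 0%N != 0 -> fps_inv (fcomp g c) = fcomp (fps_inv g) c.
Proof. by move=> c0 g0; apply: inv_uniq; rewrite -compM // inv_correct // comp1. Qed.

Lemma D_inv (h : F) : h 0%N != 0 -> D (fps_inv h) = - (D h * fps_inv h ^+ 2).
Proof.
move=> h0; have e := congr1 D (inv_correct h0); rewrite D1 DM in e.
have : fps_inv h * (D h * fps_inv h + h * D (fps_inv h)) = 0 by rewrite e mulr0.
rewrite mulrDr [fps_inv h * (h * _)]mulrA [fps_inv h * h]mulrC inv_correct // mul1r => /eqP.
by rewrite addr_eq0 => /eqP e2; rewrite -[D (fps_inv h)]opprK -e2 mulrCA -expr2.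
Qed.
End Inv.


Section Char0.
Variable R : fieldType.
Hypothesis hR : [pchar R] =i pred0.
Local Notation F := (fps R).
Local Notation X := (fX R).

Lemma natr_neq0 n : (n.+1)%:R != 0 :> R.
Proof. by rewrite ((pcharf0P R).1 hR). Qed.

Lemma mulrnI_S n (x y : R) : x *+ n.+1 = y *+ n.+1 -> x = y.
Proof. by rewrite -[x *+ _]mulr_natr -[y *+ _]mulr_natr => /mulIf; apply; apply: natr_neq0. Qed.

Lemma D_inj (u v : F) : D u = D v -> u 0%N = v 0%N -> u = v.
Proof.
move=> e e0; apply: funext => -[//|n].
by apply: (@mulrnI_S n); have := congr1 (fun f : F => f n) e.
Qed.

Lemma ode_uniq (y z w : F) : D y = y * w -> D z = z * w -> y 0%N = z 0%N -> y = z.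
Proof.
move=> hy hz e0; apply/eqP; rewrite -subr_eq0; apply/eqP.
set d := y - z.
have hd : D d = d * w by rewrite /d DB hy hz mulrBl.
have d0 : d 0%N = 0 by rewrite /d fcoefB e0 subrr.
suff H : forall n i, (i <= n)%N -> d i = 0 by apply: funext => n; apply: (H n).
elim=> [|n IH] i hi; first by move: hi; rewrite leqn0 => /eqP ->.
case: (leqP i n) => hin; first exact: IH.
have -> : i = n.+1 by apply/eqP; rewrite eqn_leq hi hin.
apply: (@mulrnI_S n); rewrite mul0rn -Dcoef hd fcoefM big1 // => -[j hj] _ /=.
by rewrite IH ?mul0r // -ltnS.
Qed.

Definition Eser : F := fun k => (k`!)%:R^-1.
Definition Lser : F := fun k => (-1) ^+ k.+1 / k%:R.

Lemma fexpE (b : F) : fexp b = fcomp Eser b.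
Proof. by apply: funext => n; apply: eq_bigr => i _; rewrite mulrC. Qed.

Lemma flog1pE (h : F) : flog1p h = fcomp Lser h.
Proof.
apply: funext => n; rewrite /flog1p /fcomp -(big_mkord xpredT (fun k => Lser k * fpow h k n)).
by rewrite big_ltn // /Lser invr0 mulr0 mul0r add0r.
Qed.

Lemma DE : D Eser = Eser.
Proof.
apply: funext => n; rewrite Dcoef -[Eser n.+1 *+ _]mulr_natr /Eser factS natrM invfM [LHS]mulrC mulrA mulfV ?mul1r //.
exact: natr_neq0.
Qed.

Lemma DL : (1 + X) * D Lser = 1.
Proof.
have hDL : forall n, D Lser n = (-1) ^+ n.
  move=> n; rewrite Dcoef -[Lser n.+1 *+ _]mulr_natr /Lser -mulrA mulVf ?mulr1; last exact: natr_neq0.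
  by rewrite !exprS !mulN1r opprK.
apply: funext => -[|n]; rewrite mulrDl mul1r fcoefD.
  by rewrite fcoefXM0 hDL addr0.
by rewrite fcoefXMS !hDL exprS mulN1r addNr.
Qed.

Lemma fexp0 (u : F) : fexp u 0%N = 1.
Proof. by rewrite fexpE comp0 /Eser invr1. Qed.

Lemma D_fexp (u : F) : u 0%N = 0 -> D (fexp u) = fexp u * D u.
Proof. by move=> u0; rewrite !fexpE chain // DE. Qed.

Lemma flogE (h : F) : flog h = fcomp Lser (h - 1).
Proof. by rewrite /flog flog1pE faddE fscaleE foneE cstN cst1 mulN1r. Qed.

Lemma flog0 (h : F) : flog h 0%N = 0.
Proof. by rewrite /flog /flog1p big_geq. Qed.

Lemma D_flog (h : F) : h 0%N = 1 -> D (flog h) = D h * fps_inv h.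
Proof.
move=> h0; have c0 : (h - 1) 0%N = 0 by rewrite fcoefB h0 fcoef1 subrr.
rewrite flogE chain // DB D1 subr0 mulrC; congr (_ * _).
have e1 : fcomp (1 + X) (h - 1) = h by rewrite compD comp1 compX // addrCA subrr addr0.
have e2 : fps_inv (fcomp (1 + X) (h - 1)) = fcomp (D Lser) (h - 1).
  by apply: inv_uniq; rewrite -compM // DL comp1.
by rewrite -e2 e1.
Qed.

Lemma fpowcE (h : F) a : fpowc h a = fexp (cst a * flog h).
Proof. by rewrite /fpowc fscaleE. Qed.

Lemma fpowc0 (h : F) a : fpowc h a 0%N = 1.
Proof. exact: fexp0. Qed.

Lemma D_fpowc (h : F) a : h 0%N = 1 -> D (fpowc h a) = fpowc h a * (cst a * (D h * fps_inv h)).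
Proof.
move=> h0; rewrite fpowcE D_fexp; last by rewrite fcoefcM flog0 mulr0.
by rewrite DM Dcst mul0r add0r D_flog.
Qed.

Lemma fpowc_nat (h : F) k : h 0%N = 1 -> fpowc h (k%:R) = h ^+ k.
Proof.
move=> h0; have hi : h 0%N != 0 by rewrite h0 oner_eq0.
apply: (@ode_uniq _ _ (cst k%:R * (D h * fps_inv h))).
- exact: D_fpowc.
- rewrite DXn cstn; case: k => [|k]; first by rewrite !mulr0n mul0r mulr0.
  rewrite /= -mulr_natl.
  transitivity (k.+1%:R * (h ^+ k * D h) * (h * fps_inv h)); first by rewrite inv_correct // mulr1.
  by rewrite exprS; ring.
- by rewrite fpowc0 fcoef0X h0 expr1n.
Qed.

Lemma inv_fpowc (h : F) a : h 0%N = 1 -> fps_inv (fpowc h a) = fpowc (fps_inv h) a.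
Proof.
move=> h0; have hi : h 0%N != 0 by rewrite h0 oner_eq0.
have p0 : fpowc h a 0%N != 0 by rewrite fpowc0 oner_eq0.
have ih0 : fps_inv h 0%N = 1 by rewrite finv0 h0 invr1.
apply: (@ode_uniq _ _ (- (cst a * (D h * fps_inv h)))).
- rewrite D_inv // D_fpowc // mulrN; congr (- _).
  set P := fpowc h a; set W := cst a * _.
  transitivity ((P * fps_inv P) * (fps_inv P * W)); first by ring.
  by rewrite inv_correct // mul1r.
- rewrite D_fpowc // D_inv // inv_inv //.
  transitivity (fpowc (fps_inv h) a * - (cst a * (D h * fps_inv h)) * (h * fps_inv h)); first by ring.
  by rewrite inv_correct // mulr1.
- by rewrite finv0 !fpowc0 invr1.
Qed.

Lemma comp_fexp (y : R) (c : F) : c 0%N = 0 ->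
  fcomp (fexp (cst y * X)) c = fexp (cst y * c).
Proof.
move=> c0; have yX0 : (cst y * X) 0%N = 0 by rewrite fcoefcM /fX mulr0.
have yc0 : (cst y * c) 0%N = 0 by rewrite fcoefcM c0 mulr0.
apply: (@ode_uniq _ _ (cst y * D c)).
- rewrite chain // D_fexp // DM Dcst mul0r add0r DX mulr1 compM // comp_cst.
  by rewrite mulrA.
- by rewrite D_fexp // DM Dcst mul0r add0r.
- by rewrite comp0 !fexp0.
Qed.
End Char0.


Section Lagrange.
Variable R : fieldType.
Hypothesis hR : [pchar R] =i pred0.
Local Notation F := (fps R).
Local Notation X := (fX R).
Variables phi fb : F.
Hypothesis phi0 : phi 0%N = 1.
Hypothesis fb0 : fb 0%N = 0.
Hypothesis hinv : fcomp (X * fps_inv phi) fb = X.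

Let Q := fcomp phi fb.
Let Qi := fps_inv Q.
Let Q0 : Q 0%N = 1. Proof. by rewrite /Q comp0. Qed.
Let Q0n : Q 0%N != 0. Proof. by rewrite Q0 oner_eq0. Qed.
Let QQi : Q * Qi = 1. Proof. exact: inv_correct. Qed.
Let phin0 : phi 0%N != 0. Proof. by rewrite phi0 oner_eq0. Qed.

Lemma fb_XQ : fb = X * Q.
Proof.
have e : fb * Qi = X.
  by rewrite -[in RHS]hinv compM // compX // /Qi /Q inv_comp.
by rewrite -e -mulrA [Qi * Q]mulrC QQi mulr1.
Qed.

Lemma D_Qi : D Qi = - (D Q * Qi ^+ 2).
Proof. exact: D_inv. Qed.

Lemma D_Qin d : D (Qi ^+ d) = - (Qi ^+ d.+1 * D Q) *+ d.
Proof.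
rewrite DXn D_Qi; case: d => [|d]; first by rewrite !mulr0n.
congr (_ *+ _); rewrite /=.
by rewrite !exprS; ring.
Qed.

Lemma lemK d : (Qi ^+ d.+1 * D fb) d = (d == 0%N)%:R.
Proof.
have e : Qi ^+ d.+1 * D fb = Qi ^+ d + X * (Qi ^+ d.+1 * D Q).
  rewrite {1}fb_XQ DM DX mul1r.
  transitivity (Qi ^+ d * (Q * Qi) + X * (Qi ^+ d.+1 * D Q)); first by rewrite exprS; ring.
  by rewrite QQi mulr1.
rewrite e fcoefD; clear e; case: d => [|d] /=.
  by rewrite fcoefXM0 expr0 addr0.
rewrite fcoefXMS.
have := congr1 (fun f : F => f d) (D_Qin d.+1).
rewrite Dcoef fcoefMn fcoefN => h.
have : (Qi ^+ d.+1) d.+1 = - (Qi ^+ d.+2 * D Q) d.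
  exact: (@mulrnI_S _ hR d _ _ h).
by move=> ->; rewrite addNr.
Qed.

Lemma core (P : F) m : (Qi ^+ m.+1 * fcomp P fb * D fb) m = P m.
Proof.
rewrite (@feqn_mul _ m _ (Qi ^+ m.+1 * (Pf m P).[fb]) _ (D fb)) //; last first.
  by apply: feqn_mul => //; apply: comp_eqn.
rewrite horner_Pf big_distrr big_distrl fcoef_sum /=.
have hterm : forall j : 'I_m.+1, Qi ^+ m.+1 * (cst (P j) * fb ^+ j) * D fb =
    cst (P j) * (X ^+ j * (Qi ^+ (m - j).+1 * D fb)).
  move=> [j hj] /=.
  have -> : m.+1 = ((m - j).+1 + j)%N by lia.
  transitivity (cst (P j) * (X ^+ j * (Qi ^+ (m - j).+1 * D fb)) * (Q * Qi) ^+ j).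
    by rewrite fb_XQ !exprMn exprD; ring.
  by rewrite QQi expr1n mulr1.
rewrite (eq_bigr _ (fun j _ => congr1 (fun f : F => f m) (hterm j))) /=.
rewrite big_ord_recr /= fcoefcM fcoefXnM leqnn subnn lemK mulr1 big1 ?add0r // => -[j hj] _ /=.
rewrite fcoefcM fcoefXnM ltnW // lemK.
have -> : (m - j == 0)%N = false by apply/negbTE; rewrite subn_eq0 -ltnNge.
by rewrite mulr0.
Qed.

Lemma lagrange N k : (0 < N)%N -> (k <= N)%N ->
  (fb ^+ k) N *+ N = (phi ^+ N) (N - k)%N *+ k.
Proof.
move=> hN hk; set m := (N - k)%N.
have e1 : (fb ^+ k) N = (Q ^+ k) m by rewrite fb_XQ exprMn fcoefXnM hk.
set P2 := phi ^+ N.+1 * D (X * fps_inv phi).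
have e2 : Q ^+ k = Qi ^+ m.+1 * fcomp P2 fb * D fb.
  have c1 : fcomp (D (X * fps_inv phi)) fb * D fb = 1 by rewrite -chain // hinv DX.
  rewrite /P2 compM // compXn // -/Q.
  transitivity (Q ^+ k * (Qi * Q) ^+ m.+1 * (fcomp (D (X * fps_inv phi)) fb * D fb)).
    by rewrite c1 [Qi * Q]mulrC QQi expr1n !mulr1.
  have -> : N.+1 = (k + m.+1)%N by rewrite /m; lia.
  by rewrite exprMn exprD; ring.
have e3 : (fb ^+ k) N = P2 m by rewrite e1 e2 core.
have hNs : N = N.-1.+1 by lia.
set M := N.-1.
have e4 : P2 = phi ^+ M.+1 - X * (phi ^+ M * D phi).
  rewrite /P2 {1}hNs DM DX mul1r D_inv //.
  transitivity (phi ^+ M.+1 * (phi * fps_inv phi) - X * (phi ^+ M * D phi) * (phi * fps_inv phi) ^+ 2).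
    by rewrite !exprS; ring.
  by rewrite inv_correct // expr1n !mulr1.
have e5 : D (phi ^+ M.+1) = (phi ^+ M * D phi) *+ M.+1 by rewrite DXn.
rewrite e3 e4 fcoefB -hNs.
case hm : m => [|i].
  have -> : k = N by move: hm; rewrite /m; lia.
  by rewrite fcoefXM0 subr0.
rewrite fcoefXMS mulrnBl.
have := congr1 (fun f : F => f i) e5; rewrite Dcoef fcoefMn -hNs => <-.
rewrite -mulrnBr; last by move: hm; rewrite /m; lia.
by congr (_ *+ _); move: hm; rewrite /m; lia.
Qed.
End Lagrange.


Lemma flogq0 (R : fieldType) : flogq R 0%N = 1.
Proof.
rewrite /flogq flog1pE /fcomp !big_ord_recl big_ord0 /= /Lser /bump /=.
rewrite invr0 /fone /= mulr0 add0r addr0 addn0 invr1 mulr1 expr2 mulN1r opprK mul1r.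
rewrite /fmul !big_ord_recl big_ord0 /= /fX /=.
by rewrite mul0r mul1r add0r addr0.
Qed.

Theorem theorem4 (R : fieldType) (hR : [pchar R] =i pred0) (alpha : R)
  (S : nat -> {poly R}) :
  is_sheffer
    (fpowc (fscale 2^-1 (fadd (fexp (fX R)) (fone R))) alpha)
    (fmul (fX R) (fps_inv (flogq R))) S ->
  forall (n : nat), (1 <= n)%N -> forall x : R,
    (S n).[x] = \sum_(l < n) ('C(n.-1, l))%:R * narumi l (n%:R) * euler_poly (n - l) alpha x.
Proof.
move=> [fb [fb0 [hinv hS]]] n hn x.
set X := fX R.
have two0 : (2 : R) != 0 by apply: (natr_neq0 hR 1).
set e := fadd (fexp X) (fone R).
have X0 : X 0%N = 0 by [].
have e0 : e 0%N = 2 by rewrite /e faddE fcoefD fexp0.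
have e0n : e 0%N != 0 by rewrite e0.
set h := fscale 2^-1 e.
have h0 : h 0%N = 1 by rewrite /h fscaleE fcoefcM e0 mulVf.
set q := fscale 2 (fps_inv e).
have hq : fps_inv h = q.
  apply: inv_uniq; rewrite /h /q !fscaleE mulrCA !mulrA -cstM mulfV // cst1 mul1r.
  by rewrite inv_correct.
set H := fmul (fpowc q alpha) (fexp (fscale x X)).
have hH : forall j, euler_poly j alpha x = (j`!)%:R * H j by [].
have hinvg : fps_inv (fcomp (fpowc h alpha) fb) = fcomp (fpowc q alpha) fb.
  rewrite inv_comp //; last by rewrite fpowc0 oner_eq0.
  by rewrite inv_fpowc // hq.
have hmain : fmul (fps_inv (fcomp (fpowc h alpha) fb)) (fexp (fscale x fb)) = fcomp H fb.
  by rewrite hinvg fmulE /H fmulE compM // !fscaleE comp_fexp.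
rewrite hS hmain /fcomp.
set phi := flogq R.
have phi0 : phi 0%N = 1 by apply: flogq0.
have hnar : forall l, narumi l n%:R = (l`!)%:R * (phi ^+ n) l.
  by move=> l; rewrite /narumi fpowc_nat.
case: n hn hH hnar => [//|N] _ hH hnar.
rewrite big_ord_recl /= /fone /= mulr0 add0r mulr_sumr (reindex_inj rev_ord_inj) /=.
apply: eq_bigr => -[l hl] _ /=.
rewrite hnar hH fpowE /bump /= add1n.
have hlN : (l <= N)%N by rewrite -ltnS.
have hk : (N.+1 - l = (N - l).+1)%N by lia.
rewrite subSS add0n fmulE -exprS.
set j := (N - l)%N.
have hjN : (j.+1 <= N.+1)%N by rewrite /j; lia.
have hlag := lagrange hR phi0 fb0 hinv (ltn0Sn N) hjN.
have hl2 : (N.+1 - j.+1 = l)%N by rewrite /j; lia.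
rewrite hl2 in hlag; rewrite hk -/j.
set c := (fb ^+ j.+1) N.+1; set a := (phi ^+ N.+1) l; set Hk := H j.+1.
have hc' : c * N.+1%:R = a * j.+1%:R by rewrite !mulr_natr.
have hb' : 'C(N, l)%:R * (l`!%:R * j`!%:R) = N`!%:R :> R by rewrite -!natrM bin_fact.
transitivity (N`!%:R * Hk * (c * N.+1%:R)); first by rewrite factS natrM; ring.
rewrite hc' -hb' factS natrM; ring.
Qed.
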